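(* Let $(P,\mathcal{B})$ be a pairwise balanced design with $n\ge 2$ points, and let $\tau$ be the maximum size of a block in $\mathcal{B}$. Then \[\sum_{B\in\mathcal{B}}|B|\ \ge\ \frac{n(n-1)}{\tau-1}.\] Moreover, if $\mathcal{B}$ contains a block of size $k$, then \[\sum_{B\in\mathcal{B}}|B|\ \ge\ (n+1)k-\frac{k^2(k-1)}{n-1}\qquad\text{and}\qquad \sum_{B\in\mathcal{B}}|B|\ \ge\ k-\frac{(n-k)(n-5k-1)}{2}.\] Finally, for every integer $k$ with $n/2\le k\le n$, there exists a pairwise balanced design on $n$ points having a block of size $k$ for which $\sum_{B\in\mathcal{B}}|B| = k-\frac{(n-k)(n-5k-1)}{2}$.
   Context: A pairwise balanced design (PBD) is a pair $(P,\mathcal{B})$ where $P$ is a finite set of points and $\mathcal{B}$ is a family of subsets of $P$ (blocks) such that every two distinct points of $P$ lie in exactly one block. *)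

(* Defs.v *)
From HB Require Import structures.
From mathcomp Require Import all_boot all_order all_algebra.
Set Implicit Arguments. Unset Strict Implicit. Unset Printing Implicit Defensive.
Import Order.TTheory GRing.Theory Num.Theory.

(* Points are 'I_n; blocks form a family (a list, so repetitions allowed)
   of subsets of the points. *)
Definition is_PBD (n : nat) (bs : seq {set 'I_n}) : Prop :=
  forall x y : 'I_n, x != y ->
    count (fun B : {set 'I_n} => (x \in B) && (y \in B)) bs = 1%N.

Definition total_size (n : nat) (bs : seq {set 'I_n}) : nat :=
  \sum_(B <- bs) #|B|.

Definition max_block (n : nat) (bs : seq {set 'I_n}) : nat :=
  \max_(B <- bs) #|B|.

(* Main.v *)
Require Import Defs.
From HB Require Import structures.
From mathcomp Require Import all_boot all_order all_algebra.
From mathcomp Require Import zify ring lra.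
Import Order.TTheory GRing.Theory Num.Theory.


Lemma card_as_sum n (T B : {set 'I_n}) x :
  #|(T :&: B) :\ x| = \sum_(y in T | y != x) (y \in B : nat).
Proof.
rewrite -sum1_card [LHS]big_mkcond [RHS]big_mkcond; apply: eq_bigr => y _.
rewrite !inE; by case: (y \in T); case: (y == x); case: (y \in B).
Qed.

Lemma sum_count (T : Type) (p : pred T) s : \sum_(x <- s) (p x : nat) = count p s.
Proof. by elim: s => [|a s IH]; rewrite ?big_nil ?big_cons ?IH. Qed.

Lemma key n (bs : seq {set 'I_n}) (S T : {set 'I_n}) : is_PBD bs ->
  \sum_(B <- bs) \sum_(x in S :&: B) #|(T :&: B) :\ x| = \sum_(x in S) #|T :\ x|.
Proof.
move=> H.
have E1 : forall B, \sum_(x in S :&: B) #|(T :&: B) :\ x| =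
   \sum_(x in S) \sum_(y in T | y != x) ((x \in B) * (y \in B))%N.
  move=> B; rewrite [LHS]big_mkcond [RHS]big_mkcond; apply: eq_bigr => x _.
  rewrite !inE card_as_sum; case: (x \in S); case: (x \in B) => /=.
  - by apply: eq_bigr => y _; rewrite mul1n.
  - by rewrite big1 // => y _; rewrite mul0n.
  - by [].
  - by [].
rewrite (eq_bigr _ (fun B _ => E1 B)) exchange_big /=; apply: eq_bigr => x _.
rewrite exchange_big /= -sum1_card [RHS]big_mkcond /=.
rewrite [LHS]big_mkcond /=; apply: eq_bigr => y _.
rewrite !inE; case: ifP => [/andP[yT yx]|F]; last by rewrite andbC F.
rewrite yT yx.
have -> : \sum_(i <- bs) ((x \in i) * (y \in i))%N
   = \sum_(i <- bs) (((x \in i) && (y \in i)) : nat).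
  by apply: eq_bigr => B _; case: (x \in B); case: (y \in B).
by rewrite sum_count H // eq_sym.
Qed.

Lemma sumD1_sub n (A C : {set 'I_n}) : A \subset C ->
  \sum_(x in A) #|C :\ x| = (#|A| * (#|C| - 1))%N.
Proof.
move=> /subsetP AC; rewrite -sum_nat_const; apply: eq_bigr => x xA.
by rewrite (cardsD1 x C) AC // add1n subn1.
Qed.

Lemma sumD1_dis n (A C : {set 'I_n}) : A \subset ~: C ->
  \sum_(x in A) #|C :\ x| = (#|A| * #|C|)%N.
Proof.
move=> /subsetP D; rewrite -sum_nat_const; apply: eq_bigr => x xA.
rewrite (cardsD1 x C); suff -> : (x \in C) = false by [].
by apply/negbTE; have := D x xA; rewrite inE.
Qed.

Section Sums.
Variables (n : nat) (bs : seq {set 'I_n}) (B0 : {set 'I_n}).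
Hypothesis H : is_PBD bs.
Hypothesis HB0 : B0 \in bs.
Let a (B : {set 'I_n}) := #|~: B0 :&: B|.
Let b (B : {set 'I_n}) := #|B0 :&: B|.
Let R := rem B0 bs.

Lemma ab_card (B : {set 'I_n}) : #|B| = (a B + b B)%N.
Proof. by rewrite /a /b -(cardsID B0 B) addnC setDE setIC [B0 :&: B]setIC. Qed.

Lemma sum_card_all : \sum_(B <- bs) (#|B| * (#|B| - 1))%N = (n * (n - 1))%N.
Proof.
have := @key n bs [set: 'I_n] [set: 'I_n] H.
rewrite sumD1_sub ?subxx // cardsT card_ord => <-.
by apply: eq_bigr => B _; rewrite !setTI sumD1_sub ?subxx.
Qed.

Lemma sum_ab : \sum_(B <- R) (a B * b B)%N = (#|~: B0| * #|B0|)%N.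
Proof.
have := @key n bs (~: B0) B0 H.
rewrite sumD1_dis ?subxx //.
move=> <-; rewrite (big_rem B0 HB0) /= setIC setICr big_set0 add0n.
apply: eq_bigr => B _; rewrite sumD1_dis //.
by apply/subsetP => x; rewrite !inE => /andP[h _]; rewrite negb_and h.
Qed.

Lemma sum_aa : \sum_(B <- R) (a B * (a B - 1))%N = (#|~: B0| * (#|~: B0| - 1))%N.
Proof.
have := @key n bs (~: B0) (~: B0) H.
rewrite sumD1_sub ?subxx // => <-; rewrite (big_rem B0 HB0) /= [~: B0 :&: B0]setIC setICr big_set0 add0n.
apply: eq_bigr => B _; rewrite sumD1_sub //.
Qed.

Lemma sum_cardR : (\sum_(B <- R) #|B| + #|B0|)%N = total_size bs.
Proof. by rewrite /total_size (big_rem B0 HB0) /= addnC. Qed.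

Lemma block_cond (B : {set 'I_n}) : B \in R -> a B = 0%N \/ (b B <= 1)%N.
Proof.
move=> BR; have Bbs : B \in bs by exact: mem_rem BR.
case: (posnP (a B)) => [|apos]; [by left|right].
rewrite leqNgt; apply/negP => bgt.
move: apos => /card_gt0P [x]; rewrite !inE => /andP[xB0 xB].
have : (0 < #|B0 :&: B|)%N by apply: leq_trans bgt.
move=> /card_gt0P [y1 y1in].
have : (0 < #|(B0 :&: B) :\ y1|)%N by move: bgt; rewrite /b (cardsD1 y1) y1in.
move=> /card_gt0P [y2]; rewrite !inE => /andP[y21 /andP[y2B0 y2B]].
move: y1in; rewrite !inE => /andP[y1B0 y1B].
have := H _ _ y21; rewrite (permP (perm_to_rem HB0)) /= y2B0 y1B0 /=.
have BneB0 : B != B0 by apply/eqP => E; move: xB0; rewrite -E xB.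
have : B \in rem B0 bs by [].
move=> BR'.
have : (0 < count (fun B1 : {set 'I_n} => (y2 \in B1) && (y1 \in B1)) (rem B0 bs))%N.
  rewrite -has_count; apply/hasP; exists B => //; by rewrite y2B y1B.
by case: count.
Qed.

End Sums.



Section Constr.
Set Implicit Arguments. Unset Strict Implicit.
Variables n k : nat.
Hypothesis nk : n <= 2*k.
Definition Pt (u c z : nat) : bool :=
  (k <= z) && (z != u) && ((u + z == c + 2*k) || (u + z == c + 3*k)).
Definition BlP (u c z : nat) : bool := (z == u) || (z == c) || Pt u c z.
Definition col (x y : nat) := if x + y < 3*k then x + y - 2*k else x + y - 3*k.
Definition blkP (x y z : nat) : bool :=
  if (x < k) && (y < k) then z < k
  else if x < k then BlP y x z else if y < k then BlP x y z else BlP x (col x y) z.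

Lemma symmBl u v c z : k <= u < n -> v < n -> z < n -> c < k ->
  Pt u c v -> BlP v c z = BlP u c z.
Proof. rewrite /BlP /Pt => *. lia. Qed.

Lemma col_eq u v c : k <= u < n -> v < n -> c < k -> Pt u c v -> col u v = c.
Proof. rewrite /col /Pt => *; case: ifP; lia. Qed.

Lemma Pt_sym u v c : k <= u < n -> v < n -> c < k -> Pt u c v -> Pt v c u.
Proof. rewrite /Pt => *; lia. Qed.

Lemma closure u c x y z : k <= u < n -> c < k -> x < n -> y < n -> z < n ->
  x != y -> BlP u c x -> BlP u c y -> BlP u c z = blkP x y z.
Proof.
move=> hu hc hx hy hz xy.
have uk : (u < k) = false by lia.
have ck : (c < k) = true by lia.
rewrite {1 2}/BlP => /orP[/orP[/eqP Ex|/eqP Ex]|Px] /orP[/orP[/eqP Ey|/eqP Ey]|Py];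
  try subst x; try subst y.
- by rewrite eqxx in xy.
- by rewrite /blkP uk ck /=.
- have vk : (y < k) = false by move: Py; rewrite /Pt; lia.
  by rewrite /blkP uk vk /= (col_eq hu hy hc Py).
- by rewrite /blkP uk ck /=.
- by rewrite eqxx in xy.
- have vk : (y < k) = false by move: Py; rewrite /Pt; lia.
  by rewrite /blkP vk ck /= (symmBl hu hy hz hc Py).
- have vk : (x < k) = false by move: Px; rewrite /Pt; lia.
  have hv : k <= x < n by move: Px; rewrite /Pt; lia.
  rewrite /blkP vk uk /= (col_eq hv (proj2 (andP hu)) hc (Pt_sym hu hx hc Px)).
  by rewrite (symmBl hu hx hz hc Px).
- have vk : (x < k) = false by move: Px; rewrite /Pt; lia.
  by rewrite /blkP vk ck /= (symmBl hu hx hz hc Px).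
- exfalso; move: Px Py xy; rewrite /Pt; lia.
Qed.

Lemma self x y : x < n -> y < n -> blkP x y x && blkP x y y.
Proof.
move=> hx hy; rewrite /blkP /BlP /Pt /col.
case: (ltnP x k) => hxk; case: (ltnP y k) => hyk /=; rewrite ?eqxx ?orbT //=.
case: ifP => h; lia.
Qed.

Hypothesis kn : k <= n.
Hypothesis n2 : 2 <= n.

Definition blk (x y : 'I_n) : {set 'I_n} := [set z : 'I_n | blkP x y z].
Definition cB0 : {set 'I_n} := [set z : 'I_n | z < k].
Definition Bl (u c : nat) : {set 'I_n} := [set z : 'I_n | BlP u c z].
Definition cbs : seq {set 'I_n} :=
  undup [seq blk p.1 p.2 | p <- enum (@predT ('I_n * 'I_n))].

Lemma blk_shape (x y : 'I_n) :
  blk x y = cB0 \/ exists u c, [/\ k <= u < n, c < k & blk x y = Bl u c].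
Proof.
case: (ltnP x k) => hxk; case: (ltnP y k) => hyk.
- left; apply/setP => z; by rewrite !inE /blkP hxk hyk.
- right; exists y, x; split => //; first by rewrite hyk /=.
  by apply/setP => z; rewrite !inE /blkP hxk /= ltnNge hyk.
- right; exists x, y; split => //; first by rewrite hxk /=.
  by apply/setP => z; rewrite !inE /blkP hyk /= ltnNge hxk /=.
- right; exists x, (col x y); split => //; first by rewrite hxk /=.
  + rewrite /col; case: ifP => ?; have := ltn_ord x; have := ltn_ord y; lia.
  + by apply/setP => z; rewrite !inE /blkP ltnNge hxk /= ltnNge hyk.
Qed.

Lemma mem_bs B : B \in cbs ->
  B = cB0 \/ exists u c, [/\ k <= u < n, c < k & B = Bl u c].
Proof.
rewrite mem_undup => /mapP [p _ ->]; exact: blk_shape.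
Qed.

Lemma blk_in_bs (x y : 'I_n) : blk x y \in cbs.
Proof.
rewrite mem_undup; apply/mapP; exists (x, y) => //; by rewrite mem_enum.
Qed.

Lemma bs_PBD : is_PBD cbs.
Proof.
move=> x y xy.
rewrite (@eq_in_count _ _ (pred1 (blk x y))); last first.
  move=> B /mem_bs HB /=; apply/idP/eqP; last first.
    by move=> ->; rewrite !inE; exact: self.
  case: HB => [->|[u [c [hu hc ->]]]].
  - rewrite !inE => /andP[hx hy]; apply/setP => z; by rewrite !inE /blkP hx hy.
  - rewrite !inE => /andP[hx hy]; apply/setP => z; rewrite !inE.
    apply: closure => //; by rewrite ltn_ord.
by rewrite count_uniq_mem ?undup_uniq // blk_in_bs.
Qed.

Lemma B0_in_bs : cB0 \in cbs.
Proof.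
have h0 : 0 < n by lia.
suff -> : cB0 = blk (Ordinal h0) (Ordinal h0) by exact: blk_in_bs.
apply/setP => z; rewrite !inE /blkP /=.
by have -> : 0 < k by lia.
Qed.

Lemma card_B0 : #|cB0| = k.
Proof.
have -> : cB0 = widen_ord kn @: [set: 'I_k].
  apply/setP => z; rewrite !inE; apply/idP/imsetP.
  - move=> zk; exists (Ordinal zk) => //; exact: val_inj.
  - by case=> i _ ->; rewrite /= ltn_ord.
rewrite card_imset ?cardsT ?card_ord //.
by move=> i j /(congr1 val) /= /val_inj.
Qed.


Lemma blk_eq B : B \in rem cB0 cbs ->
  2 * (#|~: cB0 :&: B| + #|cB0 :&: B|) + #|~: cB0 :&: B| * (#|~: cB0 :&: B| - 1)
  = 4 * (#|~: cB0 :&: B| * #|cB0 :&: B|).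
Proof.
move=> BR; have Bbs : B \in cbs by exact: mem_rem BR.
move: BR; rewrite (mem_rem_uniq _ (undup_uniq _)) !inE => /andP[ne _].
case: (mem_bs Bbs) => [E|[u [c [hu hc E]]]]; first by rewrite E eqxx in ne.
subst B.
have hcn : c < n by lia.
have hun : u < n by lia.
have -> : cB0 :&: Bl u c = [set Ordinal hcn].
  apply/setP => z; rewrite !inE -val_eqE /= /BlP /Pt; lia.
rewrite cards1.
set A := ~: cB0 :&: Bl u c.
have uA : Ordinal hun \in A by rewrite !inE /BlP eqxx /=; lia.
rewrite (cardsD1 (Ordinal hun) A) uA.
have : #|A :\ Ordinal hun| <= 1.
  apply/card_le1_eqP => z1 z2; rewrite !inE -!val_eqE /= /BlP /Pt => h1 h2.
  apply: ord_inj; have := ltn_ord z1; have := ltn_ord z2; lia.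
case: #|A :\ Ordinal hun| => [|[|//]] _ //.
Qed.

End Constr.

Local Open Scope ring_scope.
Lemma natr_mm1 (a : nat) : ((a * (a - 1))%N%:R : rat) = a%:R * (a%:R - 1).
Proof. case: a => [|a]; first by rewrite mul0n mulr0n mul0r. by rewrite natrM subn1 /= -addn1 natrD addrK. Qed.


Lemma part1 n (bs : seq {set 'I_n}) : (2 <= n)%N -> is_PBD bs ->
  (n%:R * (n%:R - 1)) / ((max_block bs)%:R - 1) <= (total_size bs)%:R :> rat.
Proof.
move=> n2 H.
have L : (n * (n - 1) <= total_size bs * (max_block bs - 1))%N.
  rewrite -(@sum_card_all n bs H) /total_size big_distrl /= !big_seq; apply: leq_sum => B Bin.
  apply: leq_mul (leqnn _) (leq_sub2r _ _); rewrite /max_block; exact: (@leq_bigmax_seq _ bs xpredT (fun B : {set 'I_n} => #|B|) B Bin).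
have tau2 : (2 <= max_block bs)%N.
  case: (leqP 2 (max_block bs)) => // h.
  have : (max_block bs - 1 = 0)%N by lia.
  move=> e; move: L; rewrite e muln0; nia.
have -> : (max_block bs)%:R - 1 = (max_block bs - 1)%N%:R :> rat by rewrite natrB //; lia.
rewrite ler_pdivrMr; last by rewrite ltr0n; lia.
have -> : n%:R * (n%:R - 1) = (n * (n - 1))%N%:R :> rat by rewrite natr_mm1.
by rewrite -natrM ler_nat.
Qed.

Lemma alg2 (K M T S : rat) : S = K + M - 1 -> 0 < S ->
  (S*S + 2*K*S)*(M*K) <= S*S*T + K*K*(M*(M-1)) + K*K*(M*K) ->
  (K+M+1)*K - K^+2*(K-1)/S <= T + K.
Proof.
move=> -> Sp H.
have Sp2 : 0 < (K+M-1)*(K+M-1) by rewrite mulr_gt0.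
rewrite -subr_ge0 -(pmulr_rge0 _ Sp2).
have -> : ((K + M - 1)*(K+M-1)) * (T + K - ((K + M + 1) * K - K ^+ 2 * (K - 1) / (K + M - 1)))
  = (K+M-1)*(K+M-1)*T + K*K*(M*(M-1)) + K*K*(M*K) - ((K+M-1)*(K+M-1) + 2*K*(K+M-1))*(M*K).
  field; by rewrite gt_eqF.
by rewrite subr_ge0.
Qed.

Lemma alg3 (K M T : rat) : 4*(M*K) <= 2*T + M*(M-1) ->
  K - ((K+M) - K)*((K+M) - 5*K - 1)/2 <= T + K.
Proof. move=> h; lra. Qed.

Lemma blk2 (s k a b : nat) : a = 0%N \/ (b <= 1)%N ->
  ((s*s + 2*k*s)*(a*b) <= s*s*(a+b) + k*k*(a*(a-1)) + k*k*(a*b))%N.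
Proof.
case=> [->|]; first by rewrite !mul0n muln0.
case: b => [|[|//]] _; first by rewrite !muln0.
case: a => [|a]; first by rewrite !mul0n muln0.
have := nat_Cauchy s (k * a.+1) => /leqifP; case: ifP => _ h; nia.
Qed.

Lemma blk3 (a b : nat) : a = 0%N \/ (b <= 1)%N ->
  (4*(a*b) <= 2*(a+b) + a*(a-1))%N.
Proof.
case=> [->|]; first by rewrite !mul0n muln0.
case: b => [|[|//]] _; first by rewrite !muln0.
case: a => [|a]; first by rewrite !mul0n muln0.
nia.
Qed.

Lemma part23 n (bs : seq {set 'I_n}) k : (2 <= n)%N -> is_PBD bs ->
  (exists2 B, B \in bs & #|B| = k) ->
           ((n%:R + 1) * k%:R - k%:R ^+ 2 * (k%:R - 1) / (n%:R - 1)
              <= (total_size bs)%:R :> rat)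
           /\ (k%:R - (n%:R - k%:R) * (n%:R - 5 * k%:R - 1) / 2
              <= (total_size bs)%:R :> rat).
Proof.
move=> n2 H [B0 HB0 <-].
set m := #|~: B0|.
have nkm : (#|B0| + m)%N = n by rewrite /m cardsC card_ord.
have Ht := @sum_cardR n bs B0 HB0.
set T' := (\sum_(B <- rem B0 bs) #|B|)%N in Ht.
have Hab := @sum_ab n bs B0 H HB0. have Haa := @sum_aa n bs B0 H HB0.
have Hc := @block_cond n bs B0 H HB0.
have nR : n%:R = #|B0|%:R + m%:R :> rat by rewrite -natrD nkm.
rewrite -Ht nR natrD.
split.
- have e1 : n%:R - 1 = (n - 1)%N%:R :> rat by rewrite natrB //; lia.
  apply: alg2 => //; rewrite -nR e1.
    rewrite ltr0n; lia.
  have Hn : (((n-1)*(n-1) + 2*#|B0|*(n-1))*(m*#|B0|) <=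
     (n-1)*(n-1)*T' + #|B0|*#|B0|*(m*(m-1)) + #|B0|*#|B0|*(m*#|B0|))%N.
    rewrite -Hab -Haa /T' !big_distrr -!big_split /= !big_seq; apply: leq_sum => B BR.
    rewrite (@ab_card n B0 B); exact: blk2 (Hc B BR).
  move: Hn (natr_mm1 m); move: (m * (m - 1))%N => q; rewrite -(ler_nat rat) !(natrD, natrM) => Hn eq; rewrite eq in Hn.
  lra.
- apply: alg3.
  have Hn : (4*(m*#|B0|) <= 2*T' + m*(m-1))%N.
    rewrite -Hab -Haa /T' !big_distrr -!big_split /= !big_seq; apply: leq_sum => B BR.
    rewrite (@ab_card n B0 B); exact: blk3 (Hc B BR).
  move: Hn (natr_mm1 m); move: (m * (m - 1))%N => q; rewrite -(ler_nat rat) !(natrD, natrM) => Hn eq; rewrite eq in Hn.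
  lra.
Qed.

Lemma part4 n k : (2 <= n)%N -> (n <= 2 * k)%N -> (k <= n)%N ->
     exists bs : seq {set 'I_n},
       [/\ is_PBD bs, (exists2 B, B \in bs & #|B| = k) &
           (total_size bs)%:R = k%:R - (n%:R - k%:R) * (n%:R - 5 * k%:R - 1) / 2 :> rat].
Proof.
move=> n2 nk kn.
have H := bs_PBD nk kn n2.
have HB0 : cB0 n k \in cbs n k by apply: B0_in_bs.
have cB := card_B0 kn.
exists (cbs n k); split => //; first by exists (cB0 n k).
set B0 := cB0 n k in HB0 cB *.
set m := #|~: B0|.
have nkm : (#|B0| + m)%N = n by rewrite /m cardsC card_ord.
have Ht := @sum_cardR n (cbs n k) B0 HB0.
set T' := (\sum_(B <- rem B0 (cbs n k)) #|B|)%N in Ht.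
have Hab := @sum_ab n (cbs n k) B0 H HB0. have Haa := @sum_aa n (cbs n k) B0 H HB0.
have Hn : (2*T' + m*(m-1) = 4*(m*#|B0|))%N.
  rewrite -Hab -Haa /T' !big_distrr -!big_split /= !big_seq; apply: eq_bigr => B BR.
  rewrite (@ab_card n B0 B); exact: blk_eq BR.
have nR : n%:R = #|B0|%:R + m%:R :> rat by rewrite -natrD nkm.
rewrite -Ht nR natrD -cB.
move: Hn (natr_mm1 m); move: (m * (m - 1))%N => q.
move=> /(congr1 (fun x => x%:R : rat)); rewrite !(natrD, natrM) => Hn eq; rewrite eq in Hn.
lra.
Qed.

Theorem mainTheorem5 (n : nat) : (2 <= n)%N ->
  (forall bs : seq {set 'I_n}, is_PBD bs ->
     [/\ (n%:R * (n%:R - 1)) / ((max_block bs)%:R - 1) <= (total_size bs)%:R :> rat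
       & forall k : nat, (exists2 B, B \in bs & #|B| = k) ->
           ((n%:R + 1) * k%:R - k%:R ^+ 2 * (k%:R - 1) / (n%:R - 1)
              <= (total_size bs)%:R :> rat)
           /\ (k%:R - (n%:R - k%:R) * (n%:R - 5 * k%:R - 1) / 2
              <= (total_size bs)%:R :> rat)])
  /\
  (forall k : nat, (n <= 2 * k)%N -> (k <= n)%N ->
     exists bs : seq {set 'I_n},
       [/\ is_PBD bs, (exists2 B, B \in bs & #|B| = k) &
           (total_size bs)%:R = k%:R - (n%:R - k%:R) * (n%:R - 5 * k%:R - 1) / 2 :> rat]).
Proof.
move=> n2; split.
- move=> bs H; split; first exact: part1.
  move=> k Hk; exact: part23.
- move=> k nk kn; exact: part4.
Qed.
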